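(* The space $\mathtt{CA}$ with the pointwise topology has the following properties: (1) it is countable; (2) it is Hausdorff; (3) it is not compact; (4) it is perfect (has no isolated points); (5) it is totally disconnected; (6) it is of first category; (7) no point has a countable neighborhood basis (so the space is not first-countable, hence neither metrizable nor second-countable); (8) it is normal; (9) it is not sequential.
   Context: $\Sigma$ is a finite alphabet with $|\Sigma|\ge 2$, and $\Sigma^\mathbb{Z}$ carries the product (Cantor) topology. The shift $\sigma$ is $\sigma(x)_i=x_{i+1}$. A cellular automaton (CA) is a continuous map $c:\Sigma^\mathbb{Z}\to\Sigma^\mathbb{Z}$ with $c\circ\sigma=\sigma\circ c$; $\mathtt{CA}$ is the set of all CA. The pointwise topology on $\mathtt{CA}$ is generated by the subbase $U_x(a)=\{c\in\mathtt{CA}\mid c(x)_0=a\}$, $x\in\Sigma^\mathbb{Z}$, $a\in\Sigma$. A space is sequential if its sequentially closed subsets (those containing the limits of all their convergent sequences) are exactly its closed subsets; it is of first category if it is a countable union of nowhere dense sets. *)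

(* Defs.v *)
From HB Require Import structures.
From mathcomp Require Import all_boot all_order all_algebra.
From Stdlib Require Import List.
Set Implicit Arguments. Unset Strict Implicit. Unset Printing Implicit Defensive.
Import GRing.Theory Num.Theory.
Local Open Scope ring_scope.

Section Topology.
Variables (T : Type) (open : (T -> Prop) -> Prop).

Definition closed (A : T -> Prop) : Prop := open (fun x => ~ A x).

Definition interior (A : T -> Prop) (x : T) : Prop :=
  exists U, open U /\ U x /\ (forall y, U y -> A y).

Definition closure (A : T -> Prop) (x : T) : Prop :=
  forall U, open U -> U x -> exists y, U y /\ A y.

Definition nowhere_dense (A : T -> Prop) : Prop :=
  forall x, ~ interior (closure A) x.

Definition first_category : Prop :=
  exists N : nat -> (T -> Prop),
    (forall n, nowhere_dense (N n)) /\ (forall x, exists n, N n x).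

Definition is_countable : Prop := exists f : T -> nat, injective f.

Definition hausdorff : Prop :=
  forall x y, x <> y -> exists U V, open U /\ open V /\ U x /\ V y /\
    (forall z, U z -> V z -> False).

Definition compact : Prop :=
  forall (I : Type) (U : I -> T -> Prop),
    (forall i, open (U i)) -> (forall x, exists i, U i x) ->
    exists l : list I, forall x, exists i, In i l /\ U i x.

Definition perfect : Prop := forall x : T, ~ open (fun y => y = x).

Definition connected_set (S : T -> Prop) : Prop :=
  ~ exists U V, open U /\ open V /\
      (forall x, S x -> U x \/ V x) /\
      (exists x, S x /\ U x) /\ (exists x, S x /\ V x) /\
      (forall x, S x -> U x -> V x -> False).

Definition totally_disconnected : Prop :=
  forall S, connected_set S -> forall x y, S x -> S y -> x = y.

Definition neighborhood (x : T) (N : T -> Prop) : Prop := interior N x.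

Definition countable_nbhd_basis (x : T) : Prop :=
  exists B : nat -> (T -> Prop),
    (forall n, neighborhood x (B n)) /\
    (forall N, neighborhood x N -> exists n, forall y, B n y -> N y).

Definition normal_space : Prop :=
  forall A B, closed A -> closed B -> (forall x, A x -> B x -> False) ->
    exists U V, open U /\ open V /\ (forall x, A x -> U x) /\
      (forall x, B x -> V x) /\ (forall x, U x -> V x -> False).

Definition converges (s : nat -> T) (l : T) : Prop :=
  forall U, open U -> U l -> exists N, forall n, (N <= n)%N -> U (s n).

Definition seq_closed (A : T -> Prop) : Prop :=
  forall (s : nat -> T) l, (forall n, A (s n)) -> converges s l -> A l.

Definition sequential : Prop := forall A, seq_closed A <-> closed A.
End Topology.

Definition conf (S : finType) := int -> S.

Definition shift (S : finType) (x : conf S) : conf S := fun i => x (i + 1).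

(* continuity w.r.t. the product (Cantor) topology on S^Z, S discrete:
   each output cell depends only on a finite window of the input *)
Definition cantor_continuous (S : finType) (c : conf S -> conf S) : Prop :=
  forall (x : conf S) (i : int), exists n : nat,
    forall y : conf S, (forall j : int, (absz j <= n)%N -> y j = x j) ->
      c y i = c x i.

Definition is_CA (S : finType) (c : conf S -> conf S) : Prop :=
  cantor_continuous c /\ (forall x, c (shift x) = shift (c x)).

Definition CA (S : finType) := {c : conf S -> conf S | is_CA c}.

Definition U_sub (S : finType) (x : conf S) (a : S) (c : CA S) : Prop :=
  proj1_sig c x 0 = a.

(* topology generated by the subbase: O is open iff every point of O lies
   in a finite intersection of subbasic sets contained in O *)
Definition pw_open (S : finType) (O : CA S -> Prop) : Prop :=
  forall c, O c -> exists l : list (conf S * S),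
    (forall p, In p l -> U_sub p.1 p.2 c) /\
    (forall d, (forall p, In p l -> U_sub p.1 p.2 d) -> O d).

(* Main.v *)
Require Import Defs.
From mathcomp Require Import all_boot all_order all_algebra.
From mathcomp Require Import zify.
From Stdlib Require List.
From Stdlib Require Import ClassicalEpsilon ProofIrrelevance FunctionalExtensionality Classical.
Set Implicit Arguments. Unset Strict Implicit. Unset Printing Implicit Defensive.
Import GRing.Theory Num.Theory.
Local Open Scope ring_scope.

Definition phi {S : finType} (c : CA S) (x : conf S) : S := proj1_sig c x 0.
Definition basic {S : finType} (l : list (conf S * S)) (c : CA S) : Prop :=
  forall p, List.In p l -> U_sub p.1 p.2 c.
Definition agreeW {S : finType} (n : nat) (x y : conf S) : Prop :=
  forall j : int, (absz j < n)%N -> x j = y j.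
Definition shiftn {S : finType} (i : int) (x : conf S) : conf S := fun j => x (j + i).

Lemma agreeW_mono {S : finType} (m n : nat) (x y : conf S) :
  (m <= n)%N -> agreeW n x y -> agreeW m x y.
Proof. move=> Hmn H j Hj; apply: H; lia. Qed.
Lemma agreeW_sym {S : finType} n (x y : conf S) : agreeW n x y -> agreeW n y x.
Proof. by move=> H j Hj; rewrite H. Qed.
Lemma agreeW_trans {S : finType} n (x y z : conf S) :
  agreeW n x y -> agreeW n y z -> agreeW n x z.
Proof. by move=> H1 H2 j Hj; rewrite H1 // H2. Qed.
Lemma agreeW_refl {S : finType} n (x : conf S) : agreeW n x x.
Proof. by []. Qed.

Lemma shiftn0 {S : finType} (x : conf S) : shiftn 0 x = x.
Proof. apply: functional_extensionality => j; by rewrite /shiftn addr0. Qed.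

Lemma shiftnS {S : finType} (n : nat) (x : conf S) :
  shiftn (n.+1)%:Z x = shift (shiftn n x).
Proof.
apply: functional_extensionality => j; rewrite /shiftn /shift; congr x; lia.
Qed.

Lemma CA_shiftn_nat {S : finType} (c : CA S) (n : nat) (x : conf S) :
  proj1_sig c (shiftn n x) = shiftn n (proj1_sig c x).
Proof.
elim: n => [|n IH]; first by rewrite !shiftn0.
by rewrite shiftnS (proj2 (proj2_sig c)) IH -shiftnS.
Qed.

Lemma CA_shiftn {S : finType} (c : CA S) (i : int) (x : conf S) :
  proj1_sig c (shiftn i x) 0 = proj1_sig c x i.
Proof.
case: i => [n|n].
  by rewrite CA_shiftn_nat /shiftn add0r.
have E : shiftn (n.+1)%:Z (shiftn (Negz n) x) = x.
  apply: functional_extensionality => j; rewrite /shiftn; congr x; lia.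
rewrite -[in RHS]E CA_shiftn_nat.
have H2 : forall z : conf S, shiftn (n.+1)%:Z z (Negz n) = z 0.
  move=> z; rewrite /shiftn; congr z; lia.
by rewrite H2.
Qed.

Lemma CA_ext {S : finType} (c d : CA S) : (forall x, phi c x = phi d x) -> c = d.
Proof.
move=> H.
have E : proj1_sig c = proj1_sig d.
  apply: functional_extensionality => x; apply: functional_extensionality => i.
  by rewrite -(CA_shiftn c) -(CA_shiftn d); apply: H.
case: c d E H => [c Hc] [d Hd] /= E _; subst d.
by rewrite (proof_irrelevance _ Hc Hd).
Qed.

Definition local {S : finType} (R : nat) (f : conf S -> S) :=
  forall x y, agreeW R x y -> f x = f y.

Lemma mkCA {S : finType} (R : nat) (f : conf S -> S) :
  local R f -> exists c : CA S, forall x, phi c x = f x.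
Proof.
move=> Hl.
have HCA : is_CA (fun (x : conf S) (i : int) => f (shiftn i x)).
  split.
    move=> x i; exists (R + absz i)%N => y Hy.
    apply: Hl => j Hj; rewrite /shiftn; apply: Hy; lia.
  move=> x; apply: functional_extensionality => i; rewrite /shift; congr f.
  apply: functional_extensionality => j; rewrite /shiftn /shift; congr x; lia.
exists (exist _ _ HCA) => x; by rewrite /phi /= shiftn0.
Qed.

Lemma sep1 {S : finType} (a : conf S) (t : list (conf S)) :
  exists R, forall y, List.In y t -> agreeW R a y -> a = y.
Proof.
elim: t => [|b t [R' IH]]; first by exists 0%N.
case: (classic (a = b)) => [<-|Hab].
  exists R' => y [<-|Hy] H //; exact: IH.
have [j Hj] : exists j, a j <> b j.
  apply: not_all_ex_not => H; apply: Hab; exact: functional_extensionality.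
exists (maxn R' (absz j).+1) => y [<-|Hy] H.
  exfalso; apply: Hj; apply: H; lia.
apply: IH => //; apply: agreeW_mono H; lia.
Qed.

Lemma sep {S : finType} (xs : list (conf S)) :
  exists R, forall x y, List.In x xs -> List.In y xs -> agreeW R x y -> x = y.
Proof.
elim: xs => [|a t [Rt IH]]; first by exists 0%N.
have [R1 H1] := sep1 a t.
exists (maxn Rt R1) => x y [<-|Hx] [<-|Hy] H //.
- apply: H1 => //; apply: agreeW_mono H; lia.
- symmetry; apply: H1 => //; apply: agreeW_sym; apply: agreeW_mono H; lia.
- apply: IH => //; apply: agreeW_mono H; lia.
Qed.

Fixpoint interp {S : finType} (d0 : S) (R : nat) (h : conf S -> S)
  (xs : list (conf S)) (y : conf S) : S :=
  match xs with
  | nil => d0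
  | a :: t => if excluded_middle_informative (agreeW R y a) then h a
              else interp d0 R h t y
  end.

Lemma interp_local {S : finType} (d0 : S) R h xs : local R (interp d0 R h xs).
Proof.
move=> y y' Hy; elim: xs => [|a t IH] //=.
case: excluded_middle_informative => H1; case: excluded_middle_informative => H2 //.
- exfalso; apply: H2; apply: agreeW_trans H1; exact: agreeW_sym.
- exfalso; apply: H1; exact: agreeW_trans H2.
Qed.

Lemma interp_ok {S : finType} (d0 : S) R h xs :
  (forall x y, List.In x xs -> List.In y xs -> agreeW R x y -> x = y) ->
  forall x, List.In x xs -> interp d0 R h xs x = h x.
Proof.
elim: xs => [|a t IH] Hs x //= Hx.
case: excluded_middle_informative => H1.
  by have E := Hs x a Hx (or_introl erefl) H1; subst x.
case: Hx => [Ex|Hx]; first by subst a; exfalso; apply: H1.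
apply: IH => // u v Hu Hv; apply: Hs; by right.
Qed.

Lemma interpolate {S : finType} (d0 : S) (h : conf S -> S) (xs : list (conf S)) :
  exists c : CA S, forall x, List.In x xs -> phi c x = h x.
Proof.
have [R HR] := sep xs.
have [c Hc] := mkCA (@interp_local S d0 R h xs).
exists c => x Hx; rewrite Hc; exact: interp_ok.
Qed.

Lemma escape {S : finType} (c : CA S) (l : list (conf S * S)) (z : conf S) (b : S) :
  basic l c -> (forall p, List.In p l -> p.1 <> z) ->
  exists d : CA S, basic l d /\ phi d z = b.
Proof.
move=> Hc Hz.
pose h := fun y => if excluded_middle_informative (y = z) then b else phi c y.
have [d Hd] := interpolate b h (z :: List.map fst l).
exists d; split.
  move=> p Hp; rewrite /U_sub -/(phi d p.1) Hd; last first.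
    right; exact: List.in_map.
  rewrite /h; case: excluded_middle_informative => E; first by exfalso; exact: Hz Hp E.
  exact: Hc.
rewrite Hd; last by left.
by rewrite /h; case: excluded_middle_informative.
Qed.

Definition Bad {S : finType} (c : CA S) (m : nat) (y : conf S) : Prop :=
  exists y1 y2, agreeW m y y1 /\ agreeW m y y2 /\ phi c y1 <> phi c y2.
Definition InfBad {S : finType} (c : CA S) (n : nat) (x : conf S) : Prop :=
  forall m, exists y, agreeW n x y /\ Bad c m y.

Lemma Bad_mono {S : finType} (c : CA S) m m' y : (m <= m')%N -> Bad c m' y -> Bad c m y.
Proof.
move=> H [y1 [y2 [H1 [H2 H3]]]]; exists y1, y2; split; [|split] => //;
  exact: agreeW_mono H _.
Qed.

Definition patch {S : finType} (n : nat) (p : S * S) (x : conf S) : conf S :=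
  fun j => if j == n%:Z then p.1 else if j == - n%:Z then p.2 else x j.

Lemma step {S : finType} (c : CA S) n x : InfBad c n x ->
  exists x', agreeW n x x' /\ InfBad c n.+1 x'.
Proof.
move=> HI; apply: NNPP => Hn.
have Hp : forall p : S * S, exists m, forall y, agreeW n.+1 (patch n p x) y -> ~ Bad c m y.
  move=> p; apply: NNPP => Hq; apply: Hn; exists (patch n p x); split.
    move=> j Hj; rewrite /patch.
    case: eqP => E1; first by exfalso; lia.
    case: eqP => E2; first by exfalso; lia.
    by [].
  move=> m; apply: NNPP => Hm; apply: Hq; exists m => y Hy HB; apply: Hm; by exists y.
pose mm := fun p => proj1_sig (constructive_indefinite_description _ (Hp p)).
have Hmm : forall p y, agreeW n.+1 (patch n p x) y -> ~ Bad c (mm p) y.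
  move=> p; exact: (proj2_sig (constructive_indefinite_description _ (Hp p))).
have [y [Hy HB]] := HI (\max_(p : S * S) mm p).
pose p := (y n%:Z, y (- n%:Z)).
apply: (Hmm p y).
  move=> j Hj; rewrite /patch /p /=.
  case: eqP => [->|E1] //; case: eqP => [->|E2] //.
  apply: Hy; lia.
apply: Bad_mono HB; exact: leq_bigmax.
Qed.

Lemma uniform {S : finType} (c : CA S) : exists R, local R (phi c).
Proof.
apply: NNPP => Hn.
have Hb : forall m, exists y, Bad c m y.
  move=> m; have Hnl : ~ local m (phi c).
    move=> H; apply: Hn; exists m; exact: H.
  have /not_all_ex_not [x Hx] := Hnl.
  have /not_all_ex_not [y Hy] := Hx.
  have [Ha Hne] : agreeW m x y /\ phi c x <> phi c y.
    by split; [apply: NNPP => H; apply: Hy => // | move=> E; apply: Hy].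
  by exists x, x, y.
have [y0 _] := Hb 0%N.
pose nextc := fun (n : nat) (x : conf S) =>
  match excluded_middle_informative (exists x', agreeW n x x' /\ InfBad c n.+1 x') with
  | left H => proj1_sig (constructive_indefinite_description _ H)
  | right _ => x end.
pose fix X (n : nat) : conf S := match n with 0%N => y0 | n'.+1 => nextc n' (X n') end.
have Inv : forall n, InfBad c n (X n) /\ agreeW n (X n) (X n.+1).
  elim => [|n [IH1 IH2]].
    have I0 : InfBad c 0 (X 0%N) by move=> m; have [y Hy] := Hb m; exists y; split.
    split => // j Hj; lia.
  have I1 : InfBad c n.+1 (X n.+1).
    rewrite /= /nextc; case: excluded_middle_informative => H.
      exact: (proj2 (proj2_sig (constructive_indefinite_description _ H))).
    by exfalso; apply: H; apply: step.
  split => //; rewrite [X n.+2]/= /nextc; case: excluded_middle_informative => H //.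
  exact: (proj1 (proj2_sig (constructive_indefinite_description _ H))).
have Ag : forall k m, (k <= m)%N -> agreeW k (X k) (X m).
  move=> k; elim => [|m IH] Hkm.
    by have -> : k = 0%N by lia.
  case: (leqP k m) => Hk.
    apply: agreeW_trans (IH Hk) _; apply: agreeW_mono (proj2 (Inv m)); exact: Hk.
  by have -> : k = m.+1 by lia.
pose z := fun j : int => X (absz j).+1 j.
have Hz : forall n, agreeW n z (X n).
  move=> n j Hj; rewrite /z; apply: (Ag (absz j).+1 n) => //; lia.
have [N HN] := proj1 (proj2_sig c) z 0.
have [y [Hy [y1 [y2 [H1 [H2 H3]]]]]] := proj1 (Inv N.+1) N.+1.
apply: H3; rewrite /phi (HN y1) ?(HN y2) // => j Hj.
  symmetry; apply: agreeW_trans (Hz N.+1) (agreeW_trans Hy H2) _ _; lia.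
symmetry; apply: agreeW_trans (Hz N.+1) (agreeW_trans Hy H1) _ _; lia.
Qed.

Definition restrict {S : finType} (R : nat) (x : conf S) : {ffun 'I_(R.*2).+1 -> S} :=
  [ffun k : 'I_(R.*2).+1 => x ((k : nat)%:Z - R%:Z)].
Definition confof {S : finType} (R : nat) (p : {ffun 'I_(R.*2).+1 -> S}) : conf S :=
  fun j => p (inord (absz (j + R%:Z))).

Lemma confof_restrict {S : finType} R (x : conf S) : agreeW R x (confof (restrict R x)).
Proof.
move=> j Hj; rewrite /confof /restrict ffunE inordK; last by lia.
congr x; lia.
Qed.

Definition tab {S : finType} (R : nat) (f : conf S -> S) : seq S :=
  map (fun p => f (confof p)) (enum {: {ffun 'I_(R.*2).+1 -> S}}).

Definition rad {S : finType} (c : CA S) : nat :=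
  proj1_sig (constructive_indefinite_description _ (uniform c)).
Lemma rad_spec {S : finType} (c : CA S) : local (rad c) (phi c).
Proof. exact: (proj2_sig (constructive_indefinite_description _ (uniform c))). Qed.

Definition code {S : finType} (c : CA S) : nat * seq S := (rad c, tab (rad c) (phi c)).

Lemma code_inj {S : finType} : injective (@code S).
Proof.
move=> c d [E1 E2]; rewrite E1 in E2.
have Lc := @rad_spec S c; rewrite E1 in Lc.
have Ld := @rad_spec S d.
move: E2; rewrite /tab => /eq_in_map Hm.
apply: CA_ext => x.
rewrite (Lc _ _ (@confof_restrict S (rad d) x)) (Ld _ _ (@confof_restrict S (rad d) x)).
by apply: Hm; rewrite mem_enum.
Qed.

Lemma CA_countable {S : finType} : is_countable (CA S).
Proof.
exists (fun c => pickle (code c)) => c d E; apply: code_inj; exact: (pcan_inj pickleK) E.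
Qed.

Lemma open_ext {S : finType} (A B : CA S -> Prop) :
  (forall c, A c <-> B c) -> pw_open A -> pw_open B.
Proof.
move=> E HA c /E Hc; have [l [H1 H2]] := HA c Hc; exists l; split => // d Hd.
by apply/E; apply: H2.
Qed.

Lemma open_basic {S : finType} (l : list (conf S * S)) : pw_open (basic l).
Proof. by move=> c Hc; exists l; split. Qed.

Lemma basic1 {S : finType} (x : conf S) a d : basic [:: (x, a)] d <-> phi d x = a.
Proof.
split; first by move=> H; apply: (H (x, a)); left.
by move=> H p [<-|[]].
Qed.

Lemma open_compl_basic {S : finType} (l : list (conf S * S)) :
  pw_open (fun c => ~ basic l c).
Proof.
move=> c Hc.
have [p Hp] := not_all_ex_not _ _ Hc.
have [Hpl Hpc] : List.In p l /\ ~ U_sub p.1 p.2 c.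
  split; [apply: NNPP => H; apply: Hp => //| move=> H; apply: Hp => //].
exists [:: (p.1, phi c p.1)]; split; first by apply/basic1.
move=> d /basic1 Hd Hb; apply: Hpc; rewrite /U_sub -/(phi c p.1) -Hd; exact: Hb.
Qed.

Lemma open_inter {S : finType} (A B : CA S -> Prop) :
  pw_open A -> pw_open B -> pw_open (fun c => A c /\ B c).
Proof.
move=> HA HB c [Ac Bc].
have [l1 [H11 H12]] := HA c Ac; have [l2 [H21 H22]] := HB c Bc.
exists (l1 ++ l2); split.
  move=> p Hp; case: (List.in_app_or _ _ _ Hp) => Hp'; [exact: H11|exact: H21].
move=> d Hd; split; [apply: H12|apply: H22] => p Hp; apply: Hd;
  apply: List.in_or_app; [left|right] => //.
Qed.

Lemma open_union {S : finType} (I : Type) (F : I -> CA S -> Prop) :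
  (forall i, pw_open (F i)) -> pw_open (fun c => exists i, F i c).
Proof.
move=> HF c [i Hi]; have [l [H1 H2]] := HF i c Hi; exists l; split => // d Hd.
by exists i; apply: H2.
Qed.

Lemma open_cond {S : finType} (P : Prop) (A : CA S -> Prop) :
  (P -> pw_open A) -> pw_open (fun c => P /\ A c).
Proof.
move=> H c [Hp Ac]; have [l [H1 H2]] := H Hp c Ac; exists l; split => // d Hd.
by split => //; apply: H2.
Qed.

Lemma open_true {S : finType} : pw_open (fun _ : CA S => True).
Proof. by move=> c _; exists nil; split. Qed.

Lemma CA_neq {S : finType} (c d : CA S) : c <> d -> exists x, phi c x <> phi d x.
Proof.
move=> H; apply: NNPP => H'; apply: H; apply: CA_ext => x.
apply: NNPP => E; apply: H'; by exists x.
Qed.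

Lemma CA_hausdorff {S : finType} : hausdorff (@pw_open S).
Proof.
move=> c d /CA_neq [x Hx].
exists (basic [:: (x, phi c x)]), (basic [:: (x, phi d x)]).
split; first exact: open_basic. split; first exact: open_basic.
split; first by apply/basic1. split; first by apply/basic1.
by move=> z /basic1 H1 /basic1 H2; apply: Hx; rewrite -H1 -H2.
Qed.

Definition other {S : finType} (a0 a1 : S) (a : S) : S := if a == a0 then a1 else a0.
Lemma other_neq {S : finType} (a0 a1 : S) a : a0 != a1 -> other a0 a1 a <> a.
Proof.
rewrite /other => H; case: eqP => [->|E] E2; first by move/eqP: H; apply.
by apply: E.
Qed.

Lemma diag {S : finType} (a0 a1 : S) (Ha : a0 != a1) (L : nat -> list (conf S * S)) :
  exists z : conf S, forall n p, List.In p (L n) -> p.1 <> z.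
Proof.
pose z := fun j : int => if (0 <= j)%R then
   match (unpickle (absz j) : option (nat * nat)) with
   | Some (n, k) => other a0 a1 ((List.nth k (L n) ((fun _ => a0), a0)).1 j)
   | None => a0 end else a0.
exists z => n p Hp E.
have [k [_ Hk]] := List.In_nth _ _ ((fun _ => a0), a0) Hp.
pose j := (pickle (n, k))%:Z.
have : p.1 j = z j by rewrite E.
rewrite /z /j /= pickleK Hk => H.
have := @other_neq S a0 a1 (p.1 (pickle (n, k))%:Z) Ha; rewrite -H; exact.
Qed.

Lemma CA_perfect {S : finType} (a0 a1 : S) (Ha : a0 != a1) : perfect (@pw_open S).
Proof.
move=> c Hc; have [l [H1 H2]] := Hc c erefl.
have [z Hz] := diag Ha (fun _ => l).
have [d [Hd1 Hd2]] := escape (other a0 a1 (phi c z)) H1 (fun p Hp => Hz 0%N p Hp).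
have E := H2 d Hd1; subst d.
exact: (@other_neq S a0 a1 (phi c z) Ha).
Qed.

Lemma CA_td {S : finType} : totally_disconnected (@pw_open S).
Proof.
move=> T HT x y Tx Ty; apply: NNPP => /CA_neq [w Hw]; apply: HT.
exists (basic [:: (w, phi x w)]), (fun c => ~ basic [:: (w, phi x w)] c).
split; first exact: open_basic. split; first exact: open_compl_basic.
split; first by move=> c _; apply: classic.
split; first by exists x; split => //; apply/basic1.
split; first by exists y; split => //; move/basic1 => E; apply: Hw.
by move=> c _ H1 H2.
Qed.

Lemma closure_sub {S : finType} (A : CA S -> Prop) :
  (forall a b, A a -> A b -> a = b) -> forall d, Defs.closure (@pw_open S) A d -> A d.
Proof.
move=> HA d Hd; apply: NNPP => Hnd.
have [e [_ Ae]] := Hd (fun _ => True) open_true I.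
have Hne : d <> e by move=> E; apply: Hnd; rewrite E.
have [U [V [HU [HV [Ud [Ve Hdis]]]]]] := CA_hausdorff Hne.
have [y [Uy Ay]] := Hd U HU Ud.
have E := HA _ _ Ay Ae; subst y; exact: Hdis e Uy Ve.
Qed.

Lemma CA_first_category {S : finType} (a0 a1 : S) (Ha : a0 != a1) :
  first_category (@pw_open S).
Proof.
have [f Hf] := @CA_countable S.
exists (fun n d => f d = n); split; last by move=> x; exists (f x).
move=> n x [U [HU [Ux HUc]]].
have HA : forall a b, f a = n -> f b = n -> a = b.
  by move=> a b Ea Eb; apply: Hf; rewrite Ea Eb.
have Hsub : forall d, U d -> d = x.
  move=> d Ud; apply: (HA); apply: (closure_sub HA); exact: HUc.
apply: (@CA_perfect S a0 a1 Ha x) => c Hcx; subst c.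
have [l [H1 H2]] := HU x Ux; exists l; split => // d Hd; exact: Hsub (H2 d Hd).
Qed.

Lemma CA_no_cnb {S : finType} (a0 a1 : S) (Ha : a0 != a1) (c : CA S) :
  ~ countable_nbhd_basis (@pw_open S) c.
Proof.
move=> [B [HB1 HB2]].
have HL : forall n, exists l, basic l c /\ forall d, basic l d -> B n d.
  move=> n; have [U [HU [Uc HUB]]] := HB1 n.
  have [l [H1 H2]] := HU c Uc; exists l; split => // d Hd; exact: HUB (H2 d Hd).
pose L := fun n => proj1_sig (constructive_indefinite_description _ (HL n)).
have HLs : forall n, basic (L n) c /\ forall d, basic (L n) d -> B n d.
  move=> n; exact: (proj2_sig (constructive_indefinite_description _ (HL n))).
have [z Hz] := diag Ha L.
have Nb : neighborhood (@pw_open S) c (basic [:: (z, phi c z)]).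
  exists (basic [:: (z, phi c z)]); split; first exact: open_basic.
  by split; first by apply/basic1.
have [n Hn] := HB2 _ Nb.
have [d [Hd1 Hd2]] := escape (other a0 a1 (phi c z)) (proj1 (HLs n)) (Hz n).
have := Hn d ((proj2 (HLs n)) d Hd1); move/basic1; rewrite Hd2.
exact: (@other_neq S a0 a1 (phi c z) Ha).
Qed.

Lemma CA_not_compact {S : finType} (a0 a1 : S) (Ha : a0 != a1) : ~ compact (@pw_open S).
Proof.
move=> Hc.
pose x0 : conf S := fun _ => a0.
pose g := fun x : conf S => if excluded_middle_informative (x = x0) then a1 else a0.
have Hcov : forall c : CA S, exists x, phi c x <> g x.
  move=> c; apply: NNPP => H.
  have Hall : forall x, phi c x = g x.
    by move=> x; apply: NNPP => E; apply: H; exists x.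
  have [N HN] := proj1 (proj2_sig c) x0 0.
  pose y : conf S := fun j => if (absz j <= N)%N then a0 else a1.
  have E1 : proj1_sig c y 0 = proj1_sig c x0 0.
    apply: HN => j Hj; by rewrite /y Hj.
  have Hy : y <> x0.
    move=> E; have := congr1 (fun f => f (N.+1)%:Z) E; rewrite /y /x0 /= ltnn.
    by move=> E2; move/eqP: Ha; apply.
  move: E1; rewrite -/(phi c y) -/(phi c x0) !Hall /g.
  destruct (excluded_middle_informative (y = x0)) as [Ey|Ny]; first by exfalso; apply: Hy.
  destruct (excluded_middle_informative (x0 = x0)) as [Hx0|Ex]; last by exfalso; apply: Ex.
  by move=> E2; move/eqP: Ha; apply.
have Hopen : forall x, pw_open (fun c : CA S => phi c x <> g x).
  move=> x c Hcx; exists [:: (x, phi c x)]; split; first by apply/basic1.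
  by move=> d /basic1 E; rewrite E.
have [l Hl] := Hc (conf S) (fun x c => phi c x <> g x) Hopen Hcov.
have [d Hd] := interpolate a0 g l.
have [i [Hi Hdi]] := Hl d.
exact: Hdi (Hd i Hi).
Qed.

Definition Un {S : finType} (a0 a1 : S) (n : nat) (x : conf S) : Prop :=
  x n%:Z = a1 /\ forall j : nat, (n < j <= n.*2)%N -> x j%:Z = a0.
Definition fn {S : finType} (a0 a1 : S) (n : nat) (x : conf S) : S :=
  if excluded_middle_informative (Un a0 a1 n x) then a1 else a0.

Lemma fn_in {S : finType} (a0 a1 : S) n x : Un a0 a1 n x -> fn a0 a1 n x = a1.
Proof. by rewrite /fn; case: excluded_middle_informative. Qed.
Lemma fn_out {S : finType} (a0 a1 : S) n x : ~ Un a0 a1 n x -> fn a0 a1 n x = a0.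
Proof. by rewrite /fn; case: excluded_middle_informative. Qed.

Lemma fn_local {S : finType} (a0 a1 : S) n : local (n.*2).+1 (fn a0 a1 n).
Proof.
move=> x y H.
have E : Un a0 a1 n x <-> Un a0 a1 n y.
  split => [[H1 H2]|[H1 H2]]; split.
  - rewrite -H //; lia.
  - move=> j Hj; rewrite -H; [exact: H2 | lia].
  - rewrite H //; lia.
  - move=> j Hj; rewrite H; [exact: H2 | lia].
rewrite /fn; case: excluded_middle_informative => H1; case: excluded_middle_informative => H2 //.
- by exfalso; apply: H2; apply/E.
- by exfalso; apply: H1; apply/E.
Qed.

Definition Aset {S : finType} (a0 a1 : S) (d : CA S) : Prop :=
  exists n, forall x, phi d x = fn a0 a1 n x.

Lemma Un_two {S : finType} (a0 a1 : S) (Ha : a0 != a1) n m x :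
  Un a0 a1 n x -> Un a0 a1 m x -> (n < m)%N -> (m <= n.*2)%N -> False.
Proof.
move=> [_ H2] [H3 _] Hnm Hm.
have := H2 m; rewrite H3 => H; move/eqP: Ha; apply; symmetry; apply: H.
by rewrite Hnm.
Qed.

Lemma counting {S : finType} (a0 a1 : S) (Ha : a0 != a1) (xs : list (conf S)) :
  exists n, forall x, List.In x xs -> ~ Un a0 a1 n x.
Proof.
apply: NNPP => H.
have H' : forall n, exists k, (k < length xs)%N /\ Un a0 a1 n (List.nth k xs (fun _ => a0)).
  move=> n; have /not_all_ex_not [x Hx] : ~ (forall x, List.In x xs -> ~ Un a0 a1 n x).
    by move=> H2; apply: H; exists n.
  have [Hin HU] : List.In x xs /\ Un a0 a1 n x.
    by split; apply: NNPP => H3; apply: Hx.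
  have [k [Hk Ek]] := List.In_nth _ _ (fun _ => a0) Hin.
  exists k; split; [apply/ltP; exact: Hk | by rewrite Ek].
pose g n := proj1_sig (constructive_indefinite_description _ (H' n)).
have Hg : forall n, (g n < length xs)%N /\ Un a0 a1 n (List.nth (g n) xs (fun _ => a0)).
  move=> n; exact: (proj2_sig (constructive_indefinite_description _ (H' n))).
pose r := length xs.
have Hinj : {in iota r.+1 r.+1 &, injective g}.
  move=> n m; rewrite !mem_iota => Hn Hm E.
  have Hn' := proj2 (Hg n); have Hm' := proj2 (Hg m); rewrite E in Hn'.
  case: (ltngtP n m) => // Hnm; exfalso.
    exact: (Un_two Ha Hn' Hm' Hnm ltac:(lia)).
  exact: (Un_two Ha Hm' Hn' Hnm ltac:(lia)).
have := @uniq_leq_size _ (map g (iota r.+1 r.+1)) (iota 0 r).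
rewrite (map_inj_in_uniq Hinj) iota_uniq size_map !size_iota ltnn => Hc.
suff : false by [].
apply: Hc => // y /mapP [n _ ->]; rewrite mem_iota add0n; exact: (proj1 (Hg n)).
Qed.

Lemma Aset_not_closed {S : finType} (a0 a1 : S) (Ha : a0 != a1) :
  ~ Defs.closed (@pw_open S) (Aset a0 a1).
Proof.
move=> Hcl.
have [c0 Hc0] := @mkCA S 0%N (fun _ => a0) (fun _ _ _ => erefl).
have nA : ~ Aset a0 a1 c0.
  move=> [n Hn].
  have := Hn (fun j => if j == n%:Z then a1 else a0); rewrite Hc0 fn_in.
    by move=> E; move/eqP: Ha; apply.
  split; first by rewrite eqxx.
  move=> j Hj; case: eqP => // E; exfalso; lia.
have [l [H1 H2]] := Hcl c0 nA.
have [n Hn] := counting Ha (List.map fst l).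
have [e He] := mkCA (@fn_local S a0 a1 n).
apply: (H2 e); last by exists n.
move=> p Hp; rewrite /U_sub -/(phi e p.1) He fn_out.
  by have := H1 p Hp; rewrite /U_sub -/(phi c0 p.1) Hc0.
apply: Hn; exact: List.in_map.
Qed.

Lemma Aset_seq_closed {S : finType} (a0 a1 : S) (Ha : a0 != a1) :
  seq_closed (@pw_open S) (Aset a0 a1).
Proof.
move=> s l HA Hconv.
pose nk k := proj1_sig (constructive_indefinite_description _ (HA k)).
have Hnks : forall k x, phi (s k) x = fn a0 a1 (nk k) x.
  move=> k; exact: (proj2_sig (constructive_indefinite_description _ (HA k))).
have Hev : forall x, exists N, forall k, (N <= k)%N -> phi (s k) x = phi l x.
  move=> x; have Hb : basic [:: (x, phi l x)] l by apply/basic1.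
  have [N HN] := Hconv _ (@open_basic S [:: (x, phi l x)]) Hb.
  by exists N => k Hk; apply/basic1; apply: HN.
case: (classic (exists n, forall N, exists k, (N <= k)%N /\ nk k = n)) => [[n Hn]|Hno].
  exists n => x; have [N HN] := Hev x; have [k [Hk Ek]] := Hn N.
  by rewrite -(HN k Hk) Hnks Ek.
exfalso.
have Hfin : forall n, exists N, forall k, (N <= k)%N -> nk k <> n.
  move=> n; apply: NNPP => H; apply: Hno; exists n => N; apply: NNPP => H2; apply: H.
  by exists N => k Hk E; apply: H2; exists k.
have Hbig : forall B, exists N, forall k, (N <= k)%N -> (B < nk k)%N.
  elim => [|B [N1 H1]].
    have [N HN] := Hfin 0%N; exists N => k Hk; have := HN k Hk; lia.
  have [N2 H2] := Hfin B.+1; exists (maxn N1 N2) => k Hk.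
  have h1 := H1 k (leq_trans (leq_maxl _ _) Hk).
  have h2 := H2 k (leq_trans (leq_maxr _ _) Hk).
  lia.
have Hpick : forall K B, exists k, (K <= k)%N /\ (B < nk k)%N.
  move=> K B; have [N HN] := Hbig B; exists (maxn K N); split; first exact: leq_maxl.
  apply: HN; exact: leq_maxr.
pose pick K B := proj1_sig (constructive_indefinite_description _ (Hpick K B)).
have Hps : forall K B, (K <= pick K B)%N /\ (B < nk (pick K B))%N.
  move=> K B; exact: (proj2_sig (constructive_indefinite_description _ (Hpick K B))).
pose fix ks j := match j with 0%N => pick 0%N 0%N | j'.+1 => pick (ks j').+1 (nk (ks j')).*2 end.
pose P j := nk (ks j).
have Hks : forall j, (j <= ks j)%N.
  elim => [|j IH] //=; have := proj1 (Hps (ks j).+1 (nk (ks j)).*2); lia.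
have HP1 : forall j, ((P j).*2 < P j.+1)%N.
  move=> j; exact: (proj2 (Hps (ks j).+1 (nk (ks j)).*2)).
have HP : forall j j', (j < j')%N -> ((P j).*2 < P j')%N.
  move=> j; elim => [|j' IH] //= Hj.
  case: (ltngtP j j') => Hjj.
  - have := IH Hjj; have := HP1 j'; lia.
  - exfalso; lia.
  - by subst; apply: HP1.
pose x : conf S := fun i => if excluded_middle_informative (exists j, i = (P j.*2)%:Z) then a1 else a0.
have Heven : forall j, Un a0 a1 (P j.*2) x.
  move=> j; split.
    rewrite /x; case: excluded_middle_informative => // H; exfalso; apply: H; by exists j.
  move=> i Hi; rewrite /x; case: excluded_middle_informative => // [[j' Ej']].
  exfalso; have Ei : i = P j'.*2 by lia.
  case: (ltngtP j'.*2 j.*2) => Hjj.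
  - have := HP _ _ Hjj; lia.
  - have := HP _ _ Hjj; lia.
  - rewrite Hjj in Ei; lia.
have Hodd : forall j, ~ Un a0 a1 (P (j.*2).+1) x.
  move=> j [H1 _]; move: H1; rewrite /x.
  destruct (excluded_middle_informative (exists j0 : nat, (P (j.*2).+1)%:Z = (P j0.*2)%:Z)) as [[j' Ej']|Nj]; last first.
    by move=> E; move/eqP: Ha; apply.
  move=> _; have Ei : P (j.*2).+1 = P j'.*2 by lia.
  case: (ltngtP j'.*2 (j.*2).+1) => Hjj.
  - have := HP _ _ Hjj; lia.
  - have := HP _ _ Hjj; lia.
  - exfalso; lia.
have [N HN] := Hev x.
have E1 : phi (s (ks N.*2)) x = phi l x.
  by apply: HN; have := Hks N.*2; lia.
have E2 : phi (s (ks (N.*2).+1)) x = phi l x.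
  by apply: HN; have := Hks (N.*2).+1; lia.
rewrite Hnks fn_in in E1; last exact: Heven.
rewrite Hnks fn_out in E2; last exact: Hodd.
by move/eqP: Ha; apply; rewrite E2 E1.
Qed.

Lemma CA_not_sequential {S : finType} (a0 a1 : S) (Ha : a0 != a1) :
  ~ sequential (@pw_open S).
Proof.
move=> H; apply: (Aset_not_closed Ha); apply/H; exact: Aset_seq_closed.
Qed.

Definition LL {S : finType} (K : CA S -> Prop) (c : CA S) : list (conf S * S) :=
  match excluded_middle_informative
     (exists l, basic l c /\ forall d, basic l d -> ~ K d) with
  | left H => proj1_sig (constructive_indefinite_description _ H)
  | right _ => nil end.

Lemma LL_spec {S : finType} (K : CA S -> Prop) c :
  Defs.closed (@pw_open S) K -> ~ K c ->
  basic (LL K c) c /\ forall d, basic (LL K c) d -> ~ K d.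
Proof.
move=> HK Hc; rewrite /LL; case: excluded_middle_informative => H.
  exact: (proj2_sig (constructive_indefinite_description _ H)).
by exfalso; apply: H; apply: HK.
Qed.

Definition Ln {S : finType} (f : CA S -> nat) (K X : CA S -> Prop) (n : nat) (c : CA S) :=
  exists a, (X a /\ f a = n) /\ basic (LL K a) c.

Lemma Ln_open {S : finType} f (K X : CA S -> Prop) n : pw_open (Ln f K X n).
Proof.
apply: (@open_union S _ (fun a c => (X a /\ f a = n) /\ basic (LL K a) c)) => a.
apply: open_cond => _; exact: open_basic.
Qed.

Lemma Ln_copen {S : finType} (f : CA S -> nat) (Hf : injective f) (K X : CA S -> Prop) n :
  pw_open (fun c => ~ Ln f K X n c).
Proof.
case: (classic (exists b, X b /\ f b = n)) => [[b [Xb Eb]]|Hno].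
  apply: (@open_ext S (fun c => ~ basic (LL K b) c)); last exact: open_compl_basic.
  move=> c; split => H.
    move=> [a [[Xa Ea] Ha]]; apply: H; have Eab : a = b by apply: Hf; rewrite Ea Eb.
    by subst.
  move=> Hb; apply: H; exists b; split => //.
apply: (@open_ext S (fun _ => True)); last exact: open_true.
move=> c; split => // _ [a [[Xa Ea] _]]; apply: Hno; by exists a.
Qed.

Lemma open_bigI {S : finType} (G : nat -> CA S -> Prop) n :
  (forall k, pw_open (G k)) -> pw_open (fun c => forall k, (k <= n)%N -> G k c).
Proof.
move=> HG; elim: n => [|n IH].
  apply: (@open_ext S (G 0%N)); last exact: HG.
  move=> c; split => [H k Hk|H]; last exact: H.
  by have -> : k = 0%N by lia.
apply: (@open_ext S (fun c => (forall k, (k <= n)%N -> G k c) /\ G n.+1 c)).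
  move=> c; split => [[H1 H2] k Hk|H]; last by split => [k Hk|]; apply: H => //; lia.
  case: (leqP k n) => Hkn; first exact: H1.
  by have -> : k = n.+1 by lia.
exact: open_inter.
Qed.

Lemma CA_normal {S : finType} : normal_space (@pw_open S).
Proof.
have [f Hf] := @CA_countable S.
move=> A B HA HB Hdis.
exists (fun c => exists n, Ln f B A n c /\ forall k, (k <= n)%N -> ~ Ln f A B k c).
exists (fun c => exists n, Ln f A B n c /\ forall k, (k <= n)%N -> ~ Ln f B A k c).
split.
  apply: (@open_union S _ (fun n c => Ln f B A n c /\ forall k, (k <= n)%N -> ~ Ln f A B k c)) => n.
  apply: open_inter; first exact: Ln_open.
  apply: (@open_bigI S (fun k c => ~ Ln f A B k c)) => k; exact: Ln_copen.
split.
  apply: (@open_union S _ (fun n c => Ln f A B n c /\ forall k, (k <= n)%N -> ~ Ln f B A k c)) => n.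
  apply: open_inter; first exact: Ln_open.
  apply: (@open_bigI S (fun k c => ~ Ln f B A k c)) => k; exact: Ln_copen.
split.
  move=> a Aa; exists (f a); split.
    exists a; split => //; apply: (proj1 (LL_spec HB _)) => Ba; exact: Hdis a Aa Ba.
  move=> k _ [b [[Bb _] Hb]].
  by apply: (proj2 (LL_spec HA (fun Ab => Hdis b Ab Bb)) a Hb).
split.
  move=> b Bb; exists (f b); split.
    exists b; split => //; apply: (proj1 (LL_spec HA _)) => Ab; exact: Hdis b Ab Bb.
  move=> k _ [a [[Aa _] Ha]].
  by apply: (proj2 (LL_spec HB (fun Ba => Hdis a Aa Ba)) b Ha).
move=> c [n [Hn1 Hn2]] [m [Hm1 Hm2]].
case: (leqP n m) => Hnm.
  exact: Hm2 n Hnm Hn1.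
apply: Hn2 m (ltnW Hnm) Hm1.
Qed.

Theorem theorem3p4 (Sigma : finType) (hS : (1 < #|Sigma|)%N) :
  let op := @pw_open Sigma in
  is_countable (CA Sigma) /\
  hausdorff op /\
  ~ compact op /\
  perfect op /\
  totally_disconnected op /\
  first_category op /\
  (forall c : CA Sigma, ~ countable_nbhd_basis op c) /\
  normal_space op /\
  ~ sequential op.
Proof.
move=> op.
have /card_gt1P [a0 [a1 [_ _ Ha]]] := hS.
split; first exact: CA_countable.
split; first exact: CA_hausdorff.
split; first exact: (CA_not_compact Ha).
split; first exact: (CA_perfect Ha).
split; first exact: CA_td.
split; first exact: (CA_first_category Ha).
split; first by move=> c; exact: (CA_no_cnb Ha).
split; first exact: CA_normal.
exact: (CA_not_sequential Ha).
Qed.
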